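(* There exist maps $k\mapsto\Lambda_k\in\mathbb{R}^{p\times p}$, with $\Lambda_k$ a discrete-time interconnection for each $k\in\mathbb{N}$, and $Q:\mathbb{N}\to\overline{\mathcal Q}_n$ such that the system $\mathbf x^+=(I_{np}+(\Lambda_k-I_p)\otimes Q_k)\mathbf x$ has an unbounded solution.
   Context: $\otimes$ Kronecker product; $\overline{\mathcal Q}_n$ the set of symmetric positive semidefinite $n\times n$ matrices with induced 2-norm at most $1$. A discrete-time interconnection is $\Lambda=[\lambda_{ij}]$ with $\lambda_{ij}\ge0$ and $\sum_j\lambda_{ij}=1$ for all $i$. *)

(* Defs.v *)
From mathcomp Require Import all_boot all_order all_algebra.
From mathcomp Require Export mxtens.
From mathcomp Require Export Rstruct.
From Stdlib Require Import Reals.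
Set Implicit Arguments. Unset Strict Implicit. Unset Printing Implicit Defensive.
Import Order.TTheory GRing.Theory Num.Theory.
Local Open Scope ring_scope.

Definition interconnection (p : nat) (L : 'M[R]_p) : Prop :=
  (forall i j, 0 <= L i j) /\ (forall i, \sum_(j < p) L i j = 1).

Definition norm2 (n : nat) (v : 'cV[R]_n) : R :=
  Num.sqrt (\sum_(i < n) v i 0 ^+ 2).

Definition Qbar (n : nat) (Q : 'M[R]_n) : Prop :=
  Q^T = Q /\
  (forall v : 'cV[R]_n, 0 <= (v^T *m Q *m v) 0 0) /\
  (forall v : 'cV[R]_n, norm2 (Q *m v) <= norm2 v).

Definition sysmx (p n : nat) (L : 'M[R]_p) (Q : 'M[R]_n) : 'M[R]_(p * n) :=
  1%:M + (L - 1%:M) *t Q.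

Definition is_solution (p n : nat) (L : nat -> 'M[R]_p) (Q : nat -> 'M[R]_n)
  (x : nat -> 'cV[R]_(p * n)) : Prop :=
  forall k, x k.+1 = sysmx (L k) (Q k) *m x k.

(* Unbounded sequence of vectors (all norms on R^{np} are equivalent). *)
Definition unbounded (m : nat) (x : nat -> 'cV[R]_m) : Prop :=
  forall B : R, exists k, B < norm2 (x k).

(* Main.v *)
Require Import Defs.
From mathcomp Require Import all_boot all_order all_algebra.
From mathcomp Require Import mxtens Rstruct.
From Stdlib Require Import Reals.
From mathcomp Require Import ring lra zify.
Set Implicit Arguments. Unset Strict Implicit. Unset Printing Implicit Defensive.
Import Order.TTheory GRing.Theory Num.Theory.
Local Open Scope ring_scope.

Definition cvec (a b c d e f : R) : 'cV[R]_(3*2) :=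
  \col_i nth (0%:R) [:: a;b;c;d;e;f] i.
Definition copyL (i0 j0 : nat) : 'M[R]_3 :=
  \matrix_(i,j) (if (i:nat) == i0 then ((j:nat)==j0)%:R else ((i:nat)==j)%:R).
Definition sym2 (a b c : R) : 'M[R]_2 :=
  \matrix_(i,j) (if (i:nat) == 0%N then (if (j:nat) == 0%N then a else b)
                 else (if (j:nat) == 0%N then b else c)).

Arguments cvec (a b c d e f)%_ring_scope.
Arguments sym2 (a b c)%_ring_scope.

Definition Px : 'M[R]_2 := sym2 1%:R 0%:R 0%:R.
Definition Py : 'M[R]_2 := sym2 0%:R 0%:R 1%:R.
Definition Pt : 'M[R]_2 := sym2 ((2%:R)^-1) (-((2%:R)^-1)) ((2%:R)^-1).

Ltac solve_step :=
  apply/matrixP => -[[|[|[|[|[|[|?]]]]]] ?] [[|//] ?] //; rewrite !mxE;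
  rewrite !big_ord_recr big_ord0 /=; rewrite !mxE /=;
  rewrite /= ?mulr0 ?mul0r ?addr0 ?add0r ?subr0 //; first [ring | (field; done)].

Section Steps.
Variable m : nat.
Let M := (m%:R : R).

Lemma step0 : sysmx (copyL 0 1) Py *m cvec 0%:R M 1%:R (1%:R + M) 2%:R M
  = cvec 0%:R (1%:R + M) 1%:R (1%:R + M) 2%:R M.
Proof. rewrite /Py /M; solve_step. Qed.
Lemma step1 : sysmx (copyL 1 2) Px *m cvec 0%:R (1%:R + M) 1%:R (1%:R + M) 2%:R M
  = cvec 0%:R (1%:R + M) 2%:R (1%:R + M) 2%:R M.
Proof. rewrite /Px /M; solve_step. Qed.
Lemma step2 : sysmx (copyL 1 0) Pt *m cvec 0%:R (1%:R + M) 2%:R (1%:R + M) 2%:R M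
  = cvec 0%:R (1%:R + M) 1%:R (2%:R + M) 2%:R M.
Proof. rewrite /Pt /M; solve_step. Qed.
Lemma step3 : sysmx (copyL 2 0) Py *m cvec 0%:R (1%:R + M) 1%:R (2%:R + M) 2%:R M
  = cvec 0%:R (1%:R + M) 1%:R (2%:R + M) 2%:R (1%:R + M).
Proof. rewrite /Py /M; solve_step. Qed.
End Steps.

Lemma Qbar_sym2 (a b c : R) :
  (forall x y : R, 0 <= a*x*x + b*x*y + b*y*x + c*y*y) ->
  (forall x y : R, (a*x+b*y)^+2 + (b*x+c*y)^+2 <= x^+2 + y^+2) ->
  Qbar (sym2 a b c).
Proof.
move=> Hp Hn; split; [|split].
- apply/matrixP => -[[|[|?]] ?] [[|[|?]] ?] //; rewrite !mxE //.
- move=> v. rewrite !mxE !big_ord_recr big_ord0 /= !mxE !big_ord_recr !big_ord0 /= !mxE /=.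
  set x := v (widen_ord _ _) 0; set y := v ord_max 0.
  have := Hp x y; nra.
- move=> v; rewrite /norm2; apply: ler_wsqrtr.
  rewrite !big_ord_recr big_ord0 /= !mxE !big_ord_recr !big_ord0 /= !mxE /=.
  set x := v (widen_ord _ _) 0; set y := v ord_max 0.
  rewrite !add0r; exact: Hn.
Qed.

Lemma Qbar_Px : Qbar Px.
Proof. apply: Qbar_sym2 => x y; have := sqr_ge0 x; have := sqr_ge0 y; nra. Qed.
Lemma Qbar_Py : Qbar Py.
Proof. apply: Qbar_sym2 => x y; have := sqr_ge0 x; have := sqr_ge0 y; nra. Qed.
Lemma Qbar_Pt : Qbar Pt.
Proof. apply: Qbar_sym2 => x y.
- have ->: 2%:R^-1 * x * x + - 2%:R^-1 * x * y + - 2%:R^-1 * y * x + 2%:R^-1 * y * y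
    = 2%:R^-1 * (x - y)^+2 :> R by ring.
  by apply: mulr_ge0; [rewrite invr_ge0 ler0n | exact: sqr_ge0].
- have ->: (2%:R^-1 * x + - 2%:R^-1 * y) ^+ 2 + (- 2%:R^-1 * x + 2%:R^-1 * y) ^+ 2
    = (x - y)^+2 / 2%:R :> R by field.
  rewrite ler_pdivrMr ?ltr0n //; have := sqr_ge0 (x + y); nra.
Qed.


Ltac solve_ic :=
  split; [ move=> i j; rewrite mxE; case: ifP => _; exact: ler0n
         | move=> -[[|[|[|?]]] ?] //; rewrite !big_ord_recr big_ord0 /= !mxE /=;
           rewrite ?mulr0 ?mul0r ?addr0 ?add0r //].

Lemma ic01 : interconnection (copyL 0 1). Proof. solve_ic. Qed.
Lemma ic12 : interconnection (copyL 1 2). Proof. solve_ic. Qed.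
Lemma ic10 : interconnection (copyL 1 0). Proof. solve_ic. Qed.
Lemma ic20 : interconnection (copyL 2 0). Proof. solve_ic. Qed.

Definition Lseq (k : nat) : 'M[R]_3 :=
  match modn k 4 with 0%N => copyL 0 1 | 1%N => copyL 1 2 | 2%N => copyL 1 0 | _ => copyL 2 0 end.
Definition Qseq (k : nat) : 'M[R]_2 :=
  match modn k 4 with 0%N => Py | 1%N => Px | 2%N => Pt | _ => Py end.

Fixpoint xs (k : nat) : 'cV[R]_(3*2) :=
  match k with
  | 0%N => cvec 0%:R (0%N)%:R 1%:R (1%:R + (0%N)%:R) 2%:R (0%N)%:R
  | k'.+1 => sysmx (Lseq k') (Qseq k') *m xs k'
  end.

Lemma xs4 m : xs (muln 4 m) = cvec 0%:R m%:R 1%:R (1%:R + m%:R) 2%:R m%:R.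
Proof.
elim: m => [//|m IH].
have -> : muln 4 m.+1 = (muln 4 m).+3.+1 by lia.
have xsS k : xs k.+1 = sysmx (Lseq k) (Qseq k) *m xs k by [].
rewrite !xsS IH.
have e0 : modn (muln 4 m) 4 = 0%N by lia.
have e1 : modn (muln 4 m).+1 4 = 1%N by lia.
have e2 : modn (muln 4 m).+2 4 = 2%N by lia.
have e3 : modn (muln 4 m).+3 4 = 3%N by lia.
rewrite /Lseq /Qseq e0 e1 e2 e3 step0 step1 step2 step3.
by rewrite !mulrS; congr cvec; ring.
Qed.

Theorem theorem14 :
  exists (p n : nat) (L : nat -> 'M[R]_p) (Q : nat -> 'M[R]_n),
    (forall k, interconnection (L k)) /\ (forall k, Qbar (Q k)) /\
    exists x : nat -> 'cV[R]_(p * n), is_solution L Q x /\ unbounded x.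
Proof.
exists 3%N, 2%N, Lseq, Qseq; split; [|split].
- move=> k; rewrite /Lseq; case: (modn k 4) => [|[|[|?]]];
    [exact: ic01 | exact: ic12 | exact: ic10 | exact: ic20].
- move=> k; rewrite /Qseq; case: (modn k 4) => [|[|[|?]]];
    [exact: Qbar_Py | exact: Qbar_Px | exact: Qbar_Pt | exact: Qbar_Py].
- exists xs; split; first by move=> k.
  move=> B.
  have hB : `|B| < (Num.bound `|B|)%:R by apply: archi_boundP.
  exists (muln 4 (Num.bound `|B|)).
  rewrite xs4; set m := Num.bound `|B|.
  apply: (lt_le_trans (le_lt_trans (ler_norm B) hB)).
  have hm : (0 : R) <= m%:R by exact: ler0n.
  rewrite -[X in X <= _](ger0_norm hm) -sqrtr_sqr /norm2; apply: ler_wsqrtr.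
  rewrite !big_ord_recr big_ord0 /= !mxE /=.
  by rewrite ?mulr0n ?expr0n /= -!addrA !add0r lerDl !addr_ge0 ?sqr_ge0.
Qed.
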